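(* For every $\theta\in V_\Lambda$, $\mathcal W(\theta)$ is a pseudo-wide subcategory of $\mathcal G$, and it is closed under arbitrary extensions: if $0\to X\to Z\to Y\to 0$ is exact with $X,Y\in\mathcal W(\theta)$ then $Z\in\mathcal W(\theta)$.
   Context: Let $\Lambda$ be a finite dimensional algebra over a field with $n$ isoclasses of simple modules, and $\mathrm{mod}\text-\Lambda$ the category of finitely generated right $\Lambda$-modules. Fix a torsion class $\mathcal G\subseteq\mathrm{mod}\text-\Lambda$ (closed under isomorphisms, extensions and quotients). For $B\in\mathcal G$, a subobject of $B$ is a submodule in $\mathcal G$; a subobject $A\subseteq B$ is strict if $A\cap B'\in\mathcal G$ for every subobject $B'$ of $B$; a strict quotient of $B$ is $B/A$ with $A$ a strict subobject. A short exact sequence $0\to A\to B\to C\to 0$ in $\mathcal G$ is strict exact if $A$ is a strict subobject of $B$. A strict morphism is a homomorphism $f:A\to B$ with $A,B\in\mathcal G$ such that $\ker f\in\mathcal G$ is a strict subobject of $A$ and $\operatorname{im} f$ is a strict subobject of $B$. A pseudo-wide subcategory of $\mathcal G$ is a nonempty class $\mathcal W\subseteq\mathcal G$ (with strict morphisms) such that for every strict morphism $f:A\to B$ with $A,B\in\mathcal W$, the modules $\ker f$, $\operatorname{im} f$, $\operatorname{coker} f$ lie in $\mathcal W$, and $\mathcal W$ is closed under strict extensions. Let $V_\Lambda=\mathrm{Hom}_{\mathbb Z}(K_0\Lambda,\mathbb R)\cong\mathbb R^n$; for $\theta\in V_\Lambda$, $\theta(M)$ denotes $\theta$ applied to the dimension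 vector of $M$. For $M\in\mathcal G$, $D_{\mathcal G}(M)$ is the set of $\theta\in V_\Lambda$ with $\theta(M)=0$ and $\theta(M')\le 0$ for every strict subobject $M'$ of $M$. $\mathcal W(\theta)$ is the class of all $X\in\mathcal G$ with $\theta\in D_{\mathcal G}(X)$. *)

(* Defs.v *)
From HB Require Import structures.
From mathcomp Require Import all_boot all_order all_algebra.
From mathcomp Require Import falgebra.
From mathcomp Require Import reals.
Set Implicit Arguments. Unset Strict Implicit. Unset Printing Implicit Defensive.
Import Order.TTheory GRing.Theory Num.Theory.
Local Open Scope ring_scope.

Section Modules.
Variables (F : fieldType) (Lam : falgType F).

(* A finitely generated right Lam-module: a finite-dimensional F-vector space
   F^d (row vectors) with a right action  m . a = m *m ract a,  where ract is an
   F-linear unital multiplicative map Lam -> 'M_d  (m.(ab) = (m.a).b). *)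
Record rmod := RMod {
  rdim : nat;
  ract : Lam -> 'M[F]_rdim;
  ract_lin : forall (k : F) (a b : Lam), ract (k *: a + b) = k *: ract a + ract b;
  ract1 : ract 1 = 1%:M;
  ractM : forall a b : Lam, ract (a * b) = ract a *m ract b }.

Definition is_hom (M N : rmod) (f : 'M[F]_(rdim M, rdim N)) : Prop :=
  forall a : Lam, ract M a *m f = f *m ract N a.

Definition ses (X Z Y : rmod) (f : 'M[F]_(rdim X, rdim Z))
    (g : 'M[F]_(rdim Z, rdim Y)) : Prop :=
  [/\ is_hom f, is_hom g, row_free f, row_full g & (f == kermx g)%MS].

Definition exact3 (X Z Y : rmod) : Prop := exists f g, @ses X Z Y f g.

Definition is_submod (M : rmod) (U : 'M[F]_(rdim M)) : Prop :=
  forall a : Lam, (U *m ract M a <= U)%MS.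

(* "The submodule U of M (with induced structure) lies in the class C":
   some module in C maps isomorphically onto U. *)
Definition sub_in (C : rmod -> Prop) (M : rmod) (U : 'M[F]_(rdim M)) : Prop :=
  exists (N : rmod) (f : 'M[F]_(rdim N, rdim M)),
    [/\ is_hom f, row_free f, (f == U)%MS & C N].

Definition quot_in (C : rmod -> Prop) (M : rmod) (U : 'M[F]_(rdim M)) : Prop :=
  exists (N : rmod) (g : 'M[F]_(rdim M, rdim N)),
    [/\ is_hom g, row_full g, (kermx g == U)%MS & C N].

Definition torsion_class (G : rmod -> Prop) : Prop :=
  [/\ exists M, G M,
      (forall M N (f : 'M[F]_(rdim M, rdim N)),
          is_hom f -> row_free f -> row_full f -> G M -> G N),
      (forall X Z Y, exact3 X Z Y -> G X -> G Y -> G Z) &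
      (forall M N (g : 'M[F]_(rdim M, rdim N)),
          is_hom g -> row_full g -> G M -> G N)].

Variable G : rmod -> Prop.

Definition subobject (B : rmod) (U : 'M[F]_(rdim B)) : Prop :=
  is_submod U /\ sub_in G U.

Definition strict_subobject (B : rmod) (U : 'M[F]_(rdim B)) : Prop :=
  subobject U /\
  forall B' : 'M[F]_(rdim B), subobject B' -> sub_in G (U :&: B')%MS.

Definition strict_exact (X Z Y : rmod) : Prop :=
  [/\ G X, G Z, G Y &
      exists f g, @ses X Z Y f g /\ strict_subobject (<<f>>%MS)].

Definition strict_morphism (A B : rmod) (f : 'M[F]_(rdim A, rdim B)) : Prop :=
  [/\ G A, G B, is_hom f, strict_subobject (kermx f) & strict_subobject (<<f>>%MS)].

Definition pseudo_wide (W : rmod -> Prop) : Prop :=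
  [/\ exists M, W M,
      (forall M, W M -> G M),
      (forall A B (f : 'M[F]_(rdim A, rdim B)), W A -> W B -> strict_morphism f ->
          [/\ sub_in W (kermx f), sub_in W (<<f>>%MS) & quot_in W (<<f>>%MS)]) &
      (forall X Z Y, strict_exact X Z Y -> W X -> W Y -> W Z)].

Variable R : realType.

(* Elements of V_Lam = Hom_Z(K_0 Lam, R): functions on modules additive on
   short exact sequences (universal property of the Grothendieck group). *)
Definition additive_fun (theta : rmod -> R) : Prop :=
  forall X Z Y, exact3 X Z Y -> theta Z = theta X + theta Y.

Definition in_D (theta : rmod -> R) (M : rmod) : Prop :=
  theta M = 0 /\
  forall (N : rmod) (f : 'M[F]_(rdim N, rdim M)),
    is_hom f -> row_free f -> strict_subobject (<<f>>%MS) -> theta N <= 0.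

Definition Wtheta (theta : rmod -> R) (X : rmod) : Prop := G X /\ in_D theta X.

End Modules.

(* Main.v *)
Require Import Defs.
From mathcomp Require Import all_boot all_order all_algebra falgebra reals.
From mathcomp Require Import lra.
Set Implicit Arguments. Unset Strict Implicit. Unset Printing Implicit Defensive.
Import Order.TTheory GRing.Theory Num.Theory.
Local Open Scope ring_scope.

Section Aux.
Variables (F : fieldType) (Lam : falgType F).
Local Notation rmod := (rmod Lam).

Definition wit (N M : rmod) m (e : 'M[F]_(rdim N, rdim M)) (U : 'M[F]_(m, rdim M)) :=
  [/\ is_hom e, row_free e & (e == U)%MS].

Lemma ext_exact (M P X Y N : rmod) (h : 'M[F]_(rdim M, rdim P)) m (U : 'M_(m, rdim M))
  (x : 'M_(rdim X, rdim M)) (y : 'M_(rdim Y, rdim P)) (u : 'M_(rdim N, rdim M)) :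
  is_hom h -> wit x (U :&: kermx h)%MS -> wit y (U *m h) -> wit u U -> exact3 X N Y.
Proof.
move=> hh [hx fx ex] [hy fy ey] [hu fu eu].
have xu : (x <= u)%MS by rewrite (eqmxP eu) (eqmxP ex) capmxSl.
have au : x *m pinvmx u *m u = x := mulmxKpV xu.
have uhy : (u *m h <= y)%MS.
  by rewrite (eqmxP ey); apply: submxMr; rewrite (eqmxP eu).
have by_ : u *m h *m pinvmx y *m y = u *m h := mulmxKpV uhy.
move: (x *m pinvmx u) au => a au; move: (u *m h *m pinvmx y) by_ => b by_.
exists a, b; split.
- move=> c; apply: (row_free_inj fu).
  by rewrite -!mulmxA au hx hu !mulmxA au.
- move=> c; apply: (row_free_inj fy).
  by rewrite -!mulmxA by_ mulmxA hu -mulmxA hh mulmxA -by_ -mulmxA -hy.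
- by rewrite /row_free -(mxrankMfree _ fu) au.
- rewrite /row_full -(mxrankMfree _ fy) by_ (eqmxMr h (eqmxP eu)) -(eqmx_rank ey).
  exact: fy.
- apply/andP; split.
    rewrite sub_kermx -(mulmx_free_eq0 _ fy) -mulmxA by_ mulmxA au.
    by rewrite -sub_kermx (eqmxP ex) capmxSr.
  rewrite -(submxMfree _ _ fu) au (eqmxP ex) sub_capmx; apply/andP; split.
    by apply: submx_trans (submxMl _ _) _; rewrite (eqmxP eu).
  by rewrite sub_kermx -mulmxA -by_ mulmxA mulmx_ker mul0mx.
Qed.

Definition smod (M : rmod) m (U : 'M[F]_(m, rdim M)) :=
  forall a : Lam, (U *m ract M a <= U)%MS.

Section SubM.
Variables (M : rmod) (r : nat) (B : 'M[F]_(r, rdim M)) (Bf : row_free B)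
  (hB : forall a, (B *m ract M a <= B)%MS).
Definition ractS (a : Lam) := B *m ract M a *m pinvmx B.
Lemma ractSB a : ractS a *m B = B *m ract M a.
Proof.
exact: mulmxKpV.
Qed.
Lemma ractS_lin k a b : ractS (k *: a + b) = k *: ractS a + ractS b.
Proof.
apply: (row_free_inj Bf).
by rewrite ractSB mulmxDl -scalemxAl !ractSB ract_lin mulmxDr scalemxAr.
Qed.
Lemma ractS1 : ractS 1 = 1%:M.
Proof. by apply: (row_free_inj Bf); rewrite ractSB ract1 mulmx1 mul1mx. Qed.
Lemma ractSM a b : ractS (a * b) = ractS a *m ractS b.
Proof.
apply: (row_free_inj Bf).
by rewrite ractSB ractM mulmxA -ractSB -[LHS]mulmxA -[RHS]mulmxA ractSB.
Qed.
Definition subM : rmod := @RMod _ Lam r ractS ractS_lin ractS1 ractSM.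
Lemma subM_hom : @is_hom _ _ subM M B.
Proof. by move=> a; exact: ractSB. Qed.
End SubM.

Lemma exists_wit (M : rmod) m (U : 'M[F]_(m, rdim M)) :
  smod U -> exists (N : rmod) (e : 'M_(rdim N, rdim M)), wit e U.
Proof.
move=> hU.
have hB : forall a, (row_base U *m ract M a <= row_base U)%MS.
  by move=> a; rewrite (eqmxMr _ (eq_row_base U)) eq_row_base; exact: hU.
exists (subM (row_base_free U) hB), (row_base U); split.
- exact: subM_hom.
- exact: row_base_free.
- by apply/eqmxP; exact: eq_row_base.
Qed.

Section QM.
Variables (M : rmod) (m : nat) (U : 'M[F]_(m, rdim M)) (hU : smod U).
Variables (r : nat) (g : 'M[F]_(rdim M, r)) (gf : row_full g)
  (kerg : forall p (v : 'M_(p, rdim M)), (v <= kermx g)%MS = (v <= U)%MS).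
Let s := pinvmx g.
Lemma sg : s *m g = 1%:M.
Proof. by rewrite -[s]mul1mx mulmxKpV // submx_full. Qed.
Definition ractQ (a : Lam) := s *m ract M a *m g.
Lemma gQ a : g *m ractQ a = ract M a *m g.
Proof.
set D := g *m s - 1%:M.
have D0 : D *m g = 0 by rewrite mulmxBl -mulmxA sg mulmx1 mul1mx subrr.
have : (D *m ract M a <= kermx g)%MS.
  rewrite kerg; apply: submx_trans (hU a); apply: submxMr.
  by rewrite -kerg sub_kermx D0.
rewrite sub_kermx /D mulmxBl mul1mx mulmxBl subr_eq0 => /eqP <-.
by rewrite /ractQ !mulmxA.
Qed.
Lemma ractQ_lin k a b : ractQ (k *: a + b) = k *: ractQ a + ractQ b.
Proof.
apply: (row_full_inj gf).
by rewrite gQ mulmxDr -scalemxAr !gQ ract_lin mulmxDl scalemxAl.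
Qed.
Lemma ractQ1 : ractQ 1 = 1%:M.
Proof. by apply: (row_full_inj gf); rewrite gQ ract1 mulmx1 mul1mx. Qed.
Lemma ractQM a b : ractQ (a * b) = ractQ a *m ractQ b.
Proof.
apply: (row_full_inj gf).
by rewrite gQ ractM [RHS]mulmxA gQ -[RHS]mulmxA gQ [RHS]mulmxA.
Qed.
Definition qM : rmod := @RMod _ Lam _ ractQ ractQ_lin ractQ1 ractQM.
Lemma qM_prop : [/\ @is_hom _ _ M qM g, row_full g & (kermx g == U)%MS].
Proof.
split; first by move=> a; rewrite /= gQ.
  exact: gf.
by apply/andP; split; [rewrite -kerg | rewrite kerg].
Qed.
End QM.

Lemma exists_quot (M : rmod) m (U : 'M[F]_(m, rdim M)) :
  smod U -> exists (Q : rmod) (q : 'M_(rdim M, rdim Q)),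
    [/\ is_hom q, row_full q & (kermx q == U)%MS].
Proof.
move=> hU.
have kerg p (v : 'M_(p, rdim M)) : (v <= kermx (col_base (cokermx U)))%MS = (v <= U)%MS.
  rewrite sub_kermx submxE -(mulmx_free_eq0 _ (row_base_free (cokermx U))).
  by rewrite -mulmxA mulmx_base.
exists (qM hU (col_base_full (cokermx U)) kerg), (col_base (cokermx U)).
exact: qM_prop.
Qed.

Lemma mx00 n (A B : 'M[F]_(0, n)) : A = B.
Proof. by rewrite (flatmx0 A) (flatmx0 B). Qed.
Lemma Z0_lin k (a b : Lam) : (0 : 'M[F]_0) = k *: 0 + 0. Proof. exact: mx00. Qed.
Lemma Z0_1 : (0 : 'M[F]_0) = 1%:M. Proof. exact: mx00. Qed.
Lemma Z0_M (a b : Lam) : (0 : 'M[F]_0) = (0 : 'M[F]_0) *m (0 : 'M[F]_0). Proof. exact: mx00. Qed.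
Definition Z0 : rmod := @RMod _ Lam 0 (fun _ => 0) Z0_lin Z0_1 Z0_M.

Lemma submx_n0 n m1 m2 (A : 'M[F]_(m1, n)) (B : 'M_(m2, n)) : n = 0 -> (A <= B)%MS.
Proof. by move=> e; subst n; rewrite submxE thinmx0. Qed.


Lemma hom_comp (N M P : rmod) (e : 'M[F]_(rdim N, rdim M)) (h : 'M_(rdim M, rdim P)) :
  is_hom e -> is_hom h -> is_hom (e *m h).
Proof. by move=> he hh a; rewrite mulmxA he -mulmxA hh mulmxA. Qed.

Lemma hom1 (M : rmod) : @is_hom _ _ M M 1%:M.
Proof. by move=> a; rewrite mulmx1 mul1mx. Qed.

Lemma pinv_mul (N M K : rmod) (e : 'M[F]_(rdim N, rdim M)) (h : 'M_(rdim K, rdim M)) :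
  (e <= h)%MS -> e *m pinvmx h *m h = e.
Proof. exact: mulmxKpV. Qed.

Lemma hom_pinv (N M K : rmod) (e : 'M[F]_(rdim N, rdim M)) (h : 'M_(rdim K, rdim M)) :
  is_hom e -> is_hom h -> row_free h -> (e <= h)%MS -> is_hom (e *m pinvmx h).
Proof.
move=> he hh fh eh a; apply: (row_free_inj fh).
move: (e *m pinvmx h) (mulmxKpV eh) => p pe.
by rewrite -[LHS]mulmxA pe he -pe -[RHS]mulmxA hh mulmxA.
Qed.

Lemma free_pinv (N M K : rmod) (e : 'M[F]_(rdim N, rdim M)) (h : 'M_(rdim K, rdim M)) :
  row_free e -> row_free h -> (e <= h)%MS -> row_free (e *m pinvmx h).
Proof.
by move=> fe fh eh; rewrite /row_free -(mxrankMfree _ fh) (mulmxKpV eh).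
Qed.

Lemma free_comp m n p (e : 'M[F]_(m, n)) (h : 'M_(n, p)) :
  row_free e -> row_free h -> row_free (e *m h).
Proof. by move=> fe fh; rewrite /row_free (mxrankMfree _ fh). Qed.

Lemma smod_eq (M : rmod) m1 m2 (U : 'M[F]_(m1, rdim M)) (V : 'M_(m2, rdim M)) :
  (U == V)%MS -> smod U -> smod V.
Proof.
move=> /eqmxP e hU a; rewrite -e; apply: submx_trans (hU a).
by apply: submxMr; rewrite e.
Qed.

Lemma smod_cap (M : rmod) m1 m2 (U : 'M[F]_(m1, rdim M)) (V : 'M_(m2, rdim M)) :
  smod U -> smod V -> smod (U :&: V)%MS.
Proof.
move=> hU hV a; rewrite sub_capmx; apply/andP; split.
  by apply: submx_trans (hU a); apply: submxMr; exact: capmxSl.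
by apply: submx_trans (hV a); apply: submxMr; exact: capmxSr.
Qed.

Lemma smod_img (K M : rmod) m (U : 'M[F]_(m, rdim K)) (h : 'M_(rdim K, rdim M)) :
  is_hom h -> smod U -> smod (U *m h).
Proof.
move=> hh hU a; rewrite -mulmxA -hh mulmxA; exact: submxMr.
Qed.

Lemma smod_img_inv (K M : rmod) m (U : 'M[F]_(m, rdim K)) (h : 'M_(rdim K, rdim M)) :
  is_hom h -> row_free h -> smod (U *m h) -> smod U.
Proof.
move=> hh fh hU a; rewrite -(submxMfree _ _ fh) -mulmxA hh mulmxA; exact: hU.
Qed.

Lemma smod_hom (N M : rmod) (h : 'M[F]_(rdim N, rdim M)) : is_hom h -> smod h.
Proof. by move=> hh a; rewrite -hh submxMl. Qed.

Lemma smod1 (M : rmod) : smod (1%:M : 'M[F]_(rdim M)).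
Proof. by move=> a; rewrite submx1. Qed.

Lemma smod_ker (M P : rmod) (g : 'M[F]_(rdim M, rdim P)) : is_hom g -> smod (kermx g).
Proof.
by move=> hg a; rewrite sub_kermx -mulmxA hg mulmxA mulmx_ker mul0mx.
Qed.

Lemma smod_gen (M : rmod) m (U : 'M[F]_(m, rdim M)) : smod U -> smod <<U>>%MS.
Proof. by move=> hU; apply: (smod_eq _ hU); apply/andP; rewrite !genmxE submx_refl. Qed.

Lemma cap_img_free m1 m2 n p (U : 'M[F]_(m1, n)) (V : 'M_(m2, n)) (h : 'M_(n, p)) :
  row_free h -> ((U :&: V) *m h == U *m h :&: V *m h)%MS.
Proof.
move=> fh; apply/andP; split.
  by rewrite sub_capmx !submxMr ?capmxSl ?capmxSr.
have Xh : (U *m h :&: V *m h <= h)%MS.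
  by apply: submx_trans (capmxSl _ _) (submxMl _ _).
rewrite -(mulmxKpV Xh) submxMfree // sub_capmx.
by rewrite -!(submxMfree _ _ fh) !(mulmxKpV Xh) capmxSl capmxSr.
Qed.

Definition pre m n (g : 'M[F]_(m, n)) (C : 'M_n) := kermx (g *m cokermx C).

Lemma pre_sub p m n (g : 'M[F]_(m, n)) (C : 'M_n) (A : 'M_(p, m)) :
  (A <= pre g C)%MS = (A *m g <= C)%MS.
Proof. by rewrite sub_kermx submxE mulmxA. Qed.

Lemma cap_pre m1 m n (A : 'M[F]_(m1, m)) (g : 'M_(m, n)) (C : 'M_n) :
  ((A :&: pre g C) *m g == A *m g :&: C)%MS.
Proof.
apply/andP; split.
  rewrite sub_capmx submxMr ?capmxSl //=.
  by rewrite -pre_sub capmxSr.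
case/submxP: (capmxSl (A *m g) C) => D eD.
rewrite eD mulmxA; apply: submxMr; rewrite sub_capmx submxMl pre_sub.
by rewrite -mulmxA -eD capmxSr.
Qed.

Lemma pre_full m n (g : 'M[F]_(m, n)) (C : 'M_n) : row_full g ->
  (pre g C *m g == C)%MS.
Proof.
move=> fg; apply/andP; split; first by rewrite -pre_sub.
rewrite -{1}(mulmxKpV (submx_full C fg)); apply: submxMr.
by rewrite pre_sub (mulmxKpV (submx_full C fg)).
Qed.

Lemma ker_pre m n (g : 'M[F]_(m, n)) (C : 'M_n) : (kermx g <= pre g C)%MS.
Proof. by rewrite pre_sub mulmx_ker sub0mx. Qed.

Lemma smod_pre (M P : rmod) (g : 'M[F]_(rdim M, rdim P)) (C : 'M_(rdim P)) :
  is_hom g -> smod C -> smod (pre g C).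
Proof.
move=> hg hC a; rewrite pre_sub -mulmxA hg mulmxA.
by apply: submx_trans (hC a); apply: submxMr; rewrite -pre_sub.
Qed.

End Aux.

Section Theory.
Variables (F : fieldType) (Lam : falgType F).
Local Notation rmod := (rmod Lam).
Variables (G : rmod -> Prop) (R : realType) (theta : rmod -> R).
Hypotheses (hG : torsion_class G) (hth : additive_fun theta).

Definition subin (C : rmod -> Prop) (M : rmod) m (U : 'M[F]_(m, rdim M)) :=
  exists (N : rmod) (f : 'M[F]_(rdim N, rdim M)),
    [/\ is_hom f, row_free f, (f == U)%MS & C N].

Lemma subin_eq C (M : rmod) m1 m2 (U : 'M[F]_(m1, rdim M)) (V : 'M_(m2, rdim M)) :
  (U == V)%MS -> subin C U -> subin C V.
Proof.
move=> /eqmxP e [N [f [hf ff ef CN]]]; exists N, f; split => //.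
by apply/andP; split; rewrite (eqmxP ef) e submx_refl.
Qed.

Lemma G_ext (M P : rmod) (h : 'M[F]_(rdim M, rdim P)) m (U : 'M_(m, rdim M)) :
  is_hom h -> smod U -> subin G (U :&: kermx h)%MS -> subin G (U *m h) -> subin G U.
Proof.
case: hG => _ _ hext _ hh hU [X [x [hx fx ex GX]]] [Y [y [hy fy ey GY]]].
have [N [u wu]] := exists_wit hU.
exists N, u; case: (wu) => hu fu eu; split => //.
exact: (hext _ _ _ (ext_exact hh (And3 hx fx ex) (And3 hy fy ey) wu)).
Qed.

Lemma theta_ext (M P X Y N : rmod) (h : 'M[F]_(rdim M, rdim P)) m (U : 'M_(m, rdim M))
  (x : 'M_(rdim X, rdim M)) (y : 'M_(rdim Y, rdim P)) (u : 'M_(rdim N, rdim M)) :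
  is_hom h -> wit x (U :&: kermx h)%MS -> wit y (U *m h) -> wit u U ->
  theta N = theta X + theta Y.
Proof. by move=> hh wx wy wu; apply: hth; exact: ext_exact hh wx wy wu. Qed.

Lemma G_quot (N M : rmod) (h : 'M[F]_(rdim N, rdim M)) m (U : 'M_(m, rdim M)) :
  is_hom h -> G N -> (h == U)%MS -> subin G U.
Proof.
case: hG => _ _ _ hquot hh GN /eqmxP ehU.
have hU : smod U by apply: (smod_eq _ (smod_hom hh)); apply/eqmxP.
have [K [u [hu fu eu]]] := exists_wit hU.
have hu' : (h <= u)%MS by rewrite (eqmxP eu) ehU.
exists K, u; split => //; apply: (hquot N K (h *m pinvmx u)).
- exact: hom_pinv.
- rewrite /row_full -(mxrankMfree _ fu) (mulmxKpV hu') ehU -(eqmx_rank eu).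
  exact: fu.
- exact: GN.
Qed.

Lemma dim0_theta (N : rmod) : rdim N = 0 -> theta N = 0.
Proof.
move=> e.
have ex : exact3 N N N.
  exists 0, 0; split.
  - by move=> a; rewrite mulmx0 mul0mx.
  - by move=> a; rewrite mulmx0 mul0mx.
  - by rewrite /row_free mxrank0 e.
  - by rewrite /row_full mxrank0 e.
  - by apply/andP; split; apply: submx_n0.
have := hth ex => h.
by move: (congr1 (fun z => z - theta N) h); rewrite addrK subrr.
Qed.

Lemma G_Z0 : G (Z0 Lam).
Proof.
case: hG => [[M0 GM0] _ _ hquot].
apply: (hquot M0 (Z0 Lam) 0) => //.
  by move=> a; rewrite mulmx0 mul0mx.
by rewrite /row_full mxrank0.
Qed.


Lemma eqb_trans m1 m2 m3 n (A : 'M[F]_(m1, n)) (B : 'M_(m2, n)) (C : 'M_(m3, n)) :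
  (A == B)%MS -> (B == C)%MS -> (A == C)%MS.
Proof. by move=> /eqmxP e1 /eqmxP e2; apply/eqmxP; exact: eqmx_trans e1 e2. Qed.
Lemma eqb_sym m1 m2 n (A : 'M[F]_(m1, n)) (B : 'M_(m2, n)) :
  (A == B)%MS -> (B == A)%MS.
Proof. by move=> /eqmxP e1; apply/eqmxP; exact: eqmx_sym e1. Qed.
Lemma eqb_gen m n (A : 'M[F]_(m, n)) : (A == <<A>>)%MS.
Proof. by apply/eqmxP; apply: eqmx_sym; exact: genmxE. Qed.
Lemma eqb_refl m n (A : 'M[F]_(m, n)) : (A == A)%MS.
Proof. by apply/andP; split. Qed.
Lemma eqb_Mr m1 m2 n p (A : 'M[F]_(m1, n)) (B : 'M_(m2, n)) (C : 'M_(n, p)) :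
  (A == B)%MS -> (A *m C == B *m C)%MS.
Proof. by move=> /eqmxP e; apply/eqmxP; exact: eqmxMr. Qed.
Lemma eqb_cap m1 m2 m3 m4 n (A : 'M[F]_(m1, n)) (B : 'M_(m2, n)) (C : 'M_(m3, n)) (D : 'M_(m4, n)) :
  (A == C)%MS -> (B == D)%MS -> (A :&: B == C :&: D)%MS.
Proof.
move=> /eqmxP e1 /eqmxP e2; apply/andP; split; apply: capmxS;
  by rewrite ?e1 ?e2 submx_refl.
Qed.

Lemma strict_eq (M : rmod) (U V : 'M[F]_(rdim M)) :
  (U == V)%MS -> strict_subobject G U -> strict_subobject G V.
Proof.
move=> e [[sU iU] hU]; split; first split.
- exact: smod_eq e sU.
- exact: subin_eq e iU.
move=> B' hB'; apply: (subin_eq _ (hU B' hB')).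
by apply: eqb_cap => //; exact: eqb_refl.
Qed.

Lemma subin_img (K M : rmod) (h : 'M[F]_(rdim K, rdim M)) m (U : 'M_(m, rdim K)) :
  is_hom h -> row_free h -> subin G U -> subin G (U *m h).
Proof.
move=> hh fh [N [e [he fe ee GN]]]; exists N, (e *m h); split => //.
- exact: hom_comp.
- exact: free_comp.
- exact: eqb_Mr.
Qed.

Lemma subin_img_inv (K M : rmod) (h : 'M[F]_(rdim K, rdim M)) m (U : 'M_(m, rdim K)) :
  is_hom h -> row_free h -> subin G (U *m h) -> subin G U.
Proof.
move=> hh fh [N [e [he fe ee GN]]].
have eh : (e <= h)%MS by rewrite (eqmxP ee) submxMl.
exists N, (e *m pinvmx h); split => //.
- exact: hom_pinv.
- exact: free_pinv.
- by apply/andP; split; rewrite -(submxMfree _ _ fh) (mulmxKpV eh) (eqmxP ee) submx_refl.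
Qed.

Lemma strict_img (K M : rmod) (h : 'M[F]_(rdim K, rdim M)) (U : 'M_(rdim K)) :
  is_hom h -> row_free h -> strict_subobject G <<h>>%MS -> strict_subobject G U ->
  strict_subobject G <<U *m h>>%MS.
Proof.
move=> hh fh [[sh ih] sth] [[sU iU] stU]; split; first split.
- exact: smod_gen (smod_img hh sU).
- exact: subin_eq (eqb_gen _) (subin_img hh fh iU).
move=> B' [sB' iB'].
have iW : subin G (<<h>> :&: B')%MS := sth B' (conj sB' iB').
have Wh : (<<h>> :&: B' <= h)%MS by apply: submx_trans (capmxSl _ _) _; rewrite genmxE.
set W := (<<h>> :&: B')%MS in iW Wh.
set V := <<W *m pinvmx h>>%MS.
have VhW : (V *m h == W)%MS.
  by apply/andP; split; rewrite (eqmxMr h (genmxE _)) (mulmxKpV Wh) submx_refl.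
have sW : smod W by apply: smod_cap => //.
have sV : smod V := smod_img_inv hh fh (smod_eq (eqb_sym VhW) sW).
have iV : subin G V := subin_img_inv hh fh (subin_eq (eqb_sym VhW) iW).
have iUV := subin_img hh fh (stU V (conj sV iV)).
apply: (subin_eq _ iUV); apply: (eqb_trans (cap_img_free _ _ fh)).
apply/andP; split; rewrite !sub_capmx; apply/andP; split.
- by rewrite genmxE capmxSl.
- by apply: submx_trans (capmxSr _ _) _; rewrite (eqmxP VhW) capmxSr.
- by apply: submx_trans (capmxSl _ _) _; rewrite genmxE.
- rewrite (eqmxP VhW) sub_capmx capmxSr andbT.
  apply: submx_trans (capmxSl _ _) _; rewrite !genmxE; exact: submxMl.
Qed.

Lemma strict_pre_inj (K M : rmod) (h : 'M[F]_(rdim K, rdim M)) (W : 'M_(rdim M)) :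
  is_hom h -> row_free h -> (W <= h)%MS -> smod W -> subin G W ->
  (forall K' : 'M_(rdim K), subobject G K' -> subin G (W :&: <<K' *m h>>)%MS) ->
  strict_subobject G <<W *m pinvmx h>>%MS.
Proof.
move=> hh fh Wh sW iW hK.
set U := <<W *m pinvmx h>>%MS.
have UhW : (U *m h == W)%MS.
  by apply/andP; split; rewrite (eqmxMr h (genmxE _)) (mulmxKpV Wh) submx_refl.
split; first split.
- exact: smod_img_inv hh fh (smod_eq (eqb_sym UhW) sW).
- exact: subin_img_inv hh fh (subin_eq (eqb_sym UhW) iW).
move=> K' hK'; apply: (subin_img_inv hh fh); apply: (subin_eq _ (hK K' hK')).
apply: eqb_sym; apply: (eqb_trans (cap_img_free _ _ fh)).
apply: eqb_cap => //; exact: eqb_gen.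
Qed.

Lemma strict_img_surj (Z Y : rmod) (g : 'M[F]_(rdim Z, rdim Y)) (S : 'M_(rdim Z)) :
  is_hom g -> row_full g -> subin G (kermx g) -> strict_subobject G S ->
  strict_subobject G <<S *m g>>%MS.
Proof.
move=> hg fg ik [[sS iS] stS]; split; first split.
- exact: smod_gen (smod_img hg sS).
- case: iS => [N [e [he fe ee GN]]].
  apply: (G_quot (hom_comp he hg) GN).
  exact: eqb_trans (eqb_Mr _ ee) (eqb_gen _).
move=> Y' [sY' iY'].
have sY'' : smod (pre g Y') := smod_pre hg sY'.
have iY'' : subin G (pre g Y').
  apply: (G_ext hg sY'').
    apply: (subin_eq _ ik); apply/andP; split.
      by rewrite sub_capmx ker_pre submx_refl.
    exact: capmxSr.
  exact: subin_eq (eqb_sym (pre_full _ fg)) iY'.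
case: (stS _ (conj sY'' iY'')) => [N [e [he fe ee GN]]].
apply: (G_quot (hom_comp he hg) GN).
apply: (eqb_trans (eqb_Mr _ ee)); apply: (eqb_trans (cap_pre _ _ _)).
apply: eqb_cap; [exact: eqb_gen | exact: eqb_refl].
Qed.

Lemma strict_pre (B Q : rmod) (q : 'M[F]_(rdim B, rdim Q)) (I : 'M_(rdim B)) (C : 'M_(rdim Q)) :
  is_hom q -> row_full q -> (kermx q == I)%MS -> strict_subobject G I ->
  strict_subobject G C -> strict_subobject G (pre q C).
Proof.
move=> hq fq kI [[sI iI] stI] [[sC iC] stC].
have sP : smod (pre q C) := smod_pre hq sC.
split; first split.
- exact: sP.
- apply: (G_ext hq sP).
    apply: (subin_eq _ iI); apply/andP; split.
      by rewrite sub_capmx; apply/andP; split; rewrite -(eqmxP kI) ?ker_pre ?submx_refl.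
    by apply: submx_trans (capmxSr _ _) _; rewrite (eqmxP kI) submx_refl.
  exact: subin_eq (eqb_sym (pre_full _ fq)) iC.
move=> B' [sB' iB'].
apply: (G_ext hq (smod_cap sP sB')).
  apply: (subin_eq _ (stI B' (conj sB' iB'))); apply/andP; split.
    rewrite sub_capmx; apply/andP; split.
      by apply: capmxS => //; rewrite -(eqmxP kI) ker_pre.
    by apply: submx_trans (capmxSl _ _) _; rewrite (eqmxP kI) submx_refl.
  rewrite sub_capmx; apply/andP; split.
    by apply: submx_trans (capmxSr _ _) _; rewrite (eqmxP kI) submx_refl.
  by apply: submx_trans (capmxSl _ _) (capmxSr _ _).
have sBq : subobject G <<B' *m q>>%MS.
  split; first exact: smod_gen (smod_img hq sB').
  case: iB' => [N [e [he fe ee GN]]].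
  apply: (G_quot (hom_comp he hq) GN).
  exact: eqb_trans (eqb_Mr _ ee) (eqb_gen _).
apply: (subin_eq _ (stC _ sBq)).
apply: eqb_sym; rewrite [(pre q C :&: B')%MS]capmxC [(C :&: _)%MS]capmxC.
apply: (eqb_trans (cap_pre _ _ _)).
apply: eqb_cap; [exact: eqb_gen | exact: eqb_refl].
Qed.


Local Notation W := (Wtheta G theta).

Lemma wit1 (M : rmod) : wit (1%:M : 'M[F]_(rdim M)) 1%:M.
Proof. by split; [exact: hom1 | rewrite /row_free mxrank1 | exact: eqb_refl]. Qed.

Lemma W_sub (M P : rmod) (h : 'M[F]_(rdim P, rdim M)) :
  is_hom h -> row_free h -> strict_subobject G <<h>>%MS -> G P -> theta P = 0 ->
  in_D G theta M -> W P.
Proof.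
move=> hh fh sh GP tP [_ DM]; split => //; split => // N' f' hf' ff' st'.
apply: (DM N' (f' *m h)); [exact: hom_comp | exact: free_comp |].
apply: (strict_eq _ (strict_img hh fh sh st')).
apply: (eqb_trans (eqb_sym (eqb_gen _))); apply: eqb_trans (eqb_gen _).
exact: eqb_Mr (eqb_sym (eqb_gen _)).
Qed.

Lemma ext_closed (X Z Y : rmod) : exact3 X Z Y -> W X -> W Y -> W Z.
Proof.
case: (hG) => _ _ hext _.
move=> exZ [GX [tX DX]] [GY [tY DY]].
case: (exZ) => [f [g [hf hg ff fg efg]]].
split; first exact: hext exZ GX GY.
split; first by rewrite (hth exZ) tX tY addr0.
move=> N f' hf' ff' stS.
have ik : subin G (kermx g) by exists X, f; split.
have sk : subobject G (kermx g) := conj (smod_ker hg) ik.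
case: (stS.2 _ sk) => K1 [e1 [he1 fe1 ee1 GK1]].
have stY := strict_img_surj hg fg ik stS.
have [Ym [y [hy fy ey]]] := exists_wit (smod_gen (smod_img hg stS.1.1)).
have fk : (f <= kermx g)%MS by rewrite (eqmxP efg) submx_refl.
have kf : (kermx g <= f)%MS by rewrite -(eqmxP efg) submx_refl.
have -> : theta N = theta K1 + theta Ym.
  apply: (@theta_ext _ _ _ _ _ g _ <<f'>>%MS e1 y f') => //.
  - by split => //; exact: eqb_trans ey (eqb_sym (eqb_gen _)).
  - by split => //; exact: eqb_gen.
have tK1 : theta K1 <= 0.
  have e1f : (e1 <= f)%MS.
    by rewrite (eqmxP ee1); apply: submx_trans (capmxSr _ _) kf.
  apply: (DX K1 (e1 *m pinvmx f)); [exact: hom_pinv | exact: free_pinv |].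
  apply: (strict_eq _ (@strict_pre_inj _ _ f (<<f'>> :&: kermx g)%MS hf ff _ _ _ _)).
  - apply: (eqb_trans (eqb_sym (eqb_gen _))); apply: eqb_trans (eqb_gen _).
    exact: eqb_Mr (eqb_sym ee1).
  - by apply: submx_trans (capmxSr _ _) kf.
  - exact: smod_cap stS.1.1 (smod_ker hg).
  - by exists K1, e1; split.
  move=> K' [sK' iK'].
  have sKf : subobject G <<K' *m f>>%MS.
    split; first exact: smod_gen (smod_img hf sK').
    exact: subin_eq (eqb_gen _) (subin_img hf ff iK').
  apply: (subin_eq _ (stS.2 _ sKf)); apply/andP; split.
    rewrite sub_capmx; apply/andP; split; last exact: capmxSr.
    apply: capmxS => //; rewrite genmxE; exact: submx_trans (submxMl _ _) fk.
  by apply: capmxS => //; exact: capmxSl.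
have tYm : theta Ym <= 0.
  apply: (DY Ym y hy fy); apply: strict_eq stY.
  exact: eqb_trans (eqb_sym ey) (eqb_gen _).
by rewrite -[0]addr0 lerD.
Qed.

Lemma strict_mor_W (A B : rmod) (f : 'M[F]_(rdim A, rdim B)) :
  W A -> W B -> strict_morphism G f ->
  [/\ sub_in W (kermx f), sub_in W <<f>>%MS & quot_in W <<f>>%MS].
Proof.
case: (hG) => _ _ _ hquot.
move=> WA WB [_ _ hf sK sI].
case: (WA) => GA [tA DA]; case: (WB) => GB [tB DB].
case: (sK) => [[_ [Km [k [hk fk ek GKm]]]] _].
case: (sI) => [[_ [Im [i [hi fi ei GIm]]]] _].
have wk : wit k (1%:M :&: kermx f)%MS by split => //; rewrite cap1mx.
have wi : wit i (1%:M *m f).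
  by split => //; rewrite mul1mx; exact: eqb_trans ei (eqb_sym (eqb_gen _)).
have tAe : theta A = theta Km + theta Im := theta_ext hf wk wi (wit1 A).
have sk' : strict_subobject G <<k>>%MS.
  exact: strict_eq (eqb_trans (eqb_sym ek) (eqb_gen k)) sK.
have si' : strict_subobject G <<i>>%MS.
  exact: strict_eq (eqb_trans (eqb_sym ei) (eqb_gen i)) sI.
have tK := DA Km k hk fk sk'.
have tI := DB Im i hi fi si'.
have tK0 : theta Km = 0.
  rewrite tA in tAe; lra.
have tI0 : theta Im = 0.
  by move: tAe; rewrite tA tK0 add0r => ->.
split.
- by exists Km, k; split => //; exact: (W_sub hk fk sk' GKm tK0 WA.2).
- by exists Im, i; split => //; exact: (W_sub hi fi si' GIm tI0 WB.2).
have [Q [q [hq fq kq]]] := exists_quot (smod_gen (smod_hom hf)).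
exists Q, q; split => //.
have wq : wit i (1%:M :&: kermx q)%MS.
  by split => //; rewrite cap1mx; exact: eqb_trans ei (eqb_sym kq).
have wq2 : wit (1%:M : 'M_(rdim Q)) (1%:M *m q).
  split; [exact: hom1 | by rewrite /row_free mxrank1 |].
  by rewrite mul1mx; apply/andP; split; [exact: submx_full | exact: submx1].
have tBe : theta B = theta Im + theta Q := theta_ext hq wq wq2 (wit1 B).
split; first exact: hquot B Q q hq fq GB.
split; first by move: tBe; rewrite tB tI0 add0r => ->.
move=> N' f' hf' ff' st'.
have stC := strict_pre hq fq kq sI st'.
have [Cm [c [hc fc ec]]] := exists_wit stC.1.1.
have tC := DB Cm c hc fc (strict_eq (eqb_trans (eqb_sym ec) (eqb_gen c)) stC).
have : theta Cm = theta Im + theta N'.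
  apply: (@theta_ext _ _ _ _ _ q _ (pre q <<f'>>%MS) i f' c) => //.
  - split => //; apply: (eqb_trans ei); apply: (eqb_trans (eqb_sym kq)).
    apply/andP; split; first by rewrite sub_capmx ker_pre submx_refl.
    exact: capmxSr.
  - by split => //; exact: eqb_trans (eqb_gen f') (eqb_sym (pre_full _ fq)).
by rewrite tI0 add0r => <-.
Qed.

End Theory.

Theorem mainTheorem12 (F : fieldType) (Lam : falgType F)
  (G : rmod Lam -> Prop) (R : realType) (theta : rmod Lam -> R) :
  torsion_class G -> additive_fun theta ->
  pseudo_wide G (Wtheta G theta) /\
  (forall X Z Y : rmod Lam, exact3 X Z Y ->
     Wtheta G theta X -> Wtheta G theta Y -> Wtheta G theta Z).
Proof.
move=> hG hth.
have ext := ext_closed hG hth.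
split; last exact: ext.
split.
- exists (Z0 Lam); split; first exact: G_Z0.
  split; first exact: dim0_theta.
  move=> N f hf ff _; rewrite (dim0_theta hth) //.
  apply/eqP; rewrite -leqn0 -(eqP ff); exact: rank_leq_col.
- by move=> M [].
- by move=> A B f WA WB sf; exact: strict_mor_W.
- move=> X Z Y [_ _ _ [f [g [s _]]]] WX WY.
  by apply: (ext X Z Y _ WX WY); exists f, g.
Qed.
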